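(* Let $G=(V,E)$ be an edge-weighted graph and consider a non-contractive embedding of its shortest-path metric $(V,d_V)$ into an HST $T$. Then for every $u,v\in V$, the set of edges $e=(x,y)\in E$ with $d_T(e)\ge d_T(u,v)$ is a cut-set for $u$ and $v$, i.e. every path in $G$ from $u$ to $v$ contains such an edge.
   Context: Here $d_T(e)$ for $e=(x,y)$ denotes the distance in $T$ between the images of $x$ and $y$, and $d_T(u,v)$ the distance between the images of $u,v$. An HST ($\mu$-HST, $\mu\ge1$... in the paper $\mu>1$) metric is the metric on the leaves of a rooted tree where each node $w$ has a label $\Delta(w)\ge0$, $\Delta(w)=0$ iff $w$ is a leaf, and $\Delta(w)\le\Delta(w')/\mu$ whenever $w$ is a child of $w'$; the distance between leaves is the label of their least common ancestor. The embedding maps points of $V$ to leaves and is non-contractive: $d_T(x,y)\ge d_V(x,y)$. *)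

(* Defs.v *)
From HB Require Import structures.
From mathcomp Require Import all_boot all_order all_algebra.
Set Implicit Arguments. Unset Strict Implicit. Unset Printing Implicit Defensive.
Import Order.TTheory GRing.Theory Num.Theory.
Local Open Scope ring_scope.

(* A graph on a finite vertex type V: edge relation E, weights w.
   A walk from x is a sequence p with path E x p; it ends at last x p.
   Its edges are the consecutive pairs zip (x :: p) p. *)
Definition walk_edges (V : Type) (x : V) (p : seq V) : seq (V * V) :=
  zip (x :: p) p.

Definition walk_length (R : numDomainType) (V : Type) (w : V -> V -> R)
  (x : V) (p : seq V) : R :=
  \sum_(e <- walk_edges x p) w e.1 e.2.

Definition is_sp_dist (R : numDomainType) (V : eqType) (E : rel V)
  (w : V -> V -> R) (x y : V) (d : R) : Prop :=
  (exists p : seq V, [/\ path E x p, last x p = y & walk_length w x p = d]) /\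
  (forall p : seq V, path E x p -> last x p = y -> d <= walk_length w x p).

(* A rooted tree on a finite node type N, given by a parent map [par]
   with root [r] (par r = r) such that every node reaches r. *)
Definition rooted_tree (N : finType) (par : N -> N) (r : N) : Prop :=
  par r = r /\ forall n : N, iter #|N| par n = r.

Definition ancestorb (N : finType) (par : N -> N) (a n : N) : bool :=
  [exists k : 'I_#|N|.+1, iter k par n == a].

Definition lca (N : finType) (par : N -> N) (x y : N) : N :=
  iter (find (fun k => ancestorb par (iter k par x) y) (iota 0 #|N|.+1))
       par x.

(* a leaf is a node that is nobody's parent (except possibly its own, for
   the root of a one-node tree). *)
Definition leafb (N : finType) (par : N -> N) (n : N) : bool :=
  [forall c : N, (c != n) ==> (par c != n)].

Definition is_HST (R : realFieldType) (N : finType) (par : N -> N) (r : N)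
  (Delta : N -> R) (mu : R) : Prop :=
  [/\ rooted_tree par r,
      1 < mu,
      (forall n, 0 <= Delta n),
      (forall n, Delta n = 0 <-> leafb par n) &
      (forall n, n != r -> Delta n <= Delta (par n) / mu)].

Definition hst_dist (R : realFieldType) (N : finType) (par : N -> N)
  (Delta : N -> R) (x y : N) : R :=
  Delta (lca par x y).

(* Main.v *)
Require Import Defs.
From HB Require Import structures.
From mathcomp Require Import all_boot all_order all_algebra.
Import Order.TTheory GRing.Theory Num.Theory.
Local Open Scope ring_scope.

Set Implicit Arguments.
Section HST.
Variables (R : realFieldType) (N : finType) (par : N -> N) (r : N)
  (Delta : N -> R) (mu : R).
Hypothesis hst : is_HST par r Delta mu.

Definition anc (m n : N) := exists k, iter k par n = m.

Lemma anc_trans a b c : anc a b -> anc b c -> anc a c.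
Proof. by move=> [i <-] [j <-]; exists (i + j)%N; rewrite iterD. Qed.

Lemma anc_bounded m n : anc m n -> exists j : 'I_#|N|.+1, iter j par n = m.
Proof.
case: hst => [[pr it] _ _ _ _] [k <-].
case: (leqP k #|N|) => hk.
  by exists (Ordinal (hk : (k < #|N|.+1)%N)).
exists ord_max => /=; rewrite it -(subnKC (ltnW hk)) iterD it.
by elim: (k - #|N|)%N => //= n ->.
Qed.

Lemma anc_b m n : anc m n -> ancestorb par m n.
Proof. by move/anc_bounded=> [j hj]; apply/existsP; exists j; rewrite hj. Qed.

Lemma b_anc m n : ancestorb par m n -> anc m n.
Proof. by move/existsP=> [j /eqP hj]; exists j. Qed.

Lemma Delta_par n : Delta n <= Delta (par n).
Proof.
case: hst => [[pr it] mu1 D0 _ Dp].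
case: (eqVneq n r) => [->|nr]; first by rewrite pr.
apply: (le_trans (Dp n nr)).
have mu0 : 0 < mu by apply: lt_trans mu1.
rewrite ler_pdivrMr //; apply: ler_peMr => //; exact: ltW.
Qed.

Lemma Delta_iter k n : Delta n <= Delta (iter k par n).
Proof.
elim: k => [|k IH] //=; exact: le_trans IH (Delta_par _).
Qed.

Lemma Delta_anc m n : anc m n -> Delta n <= Delta m.
Proof. by move=> [k <-]; apply: Delta_iter. Qed.

Let P a c := fun k => ancestorb par (iter k par a) c.

Lemma has_P a c : has (P a c) (iota 0 #|N|.+1).
Proof.
case: hst => [[pr it] _ _ _ _].
apply/hasP; exists #|N|; first by rewrite mem_iota /= add0n.
by rewrite /P it; apply: anc_b; exists #|N|.
Qed.

Lemma lca_anc_l a c : anc (lca par a c) a.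
Proof. by exists (find (P a c) (iota 0 #|N|.+1)). Qed.

Lemma lca_anc_r a c : anc (lca par a c) c.
Proof.
apply: b_anc; have := nth_find 0 (has_P a c).
have := has_P a c; rewrite has_find size_iota => hs.
by rewrite nth_iota // add0n.
Qed.

Lemma lca_min a c m : anc m a -> anc m c -> Delta (lca par a c) <= Delta m.
Proof.
move=> ma mc; have [j hj] := anc_bounded ma.
set k := find (P a c) (iota 0 #|N|.+1).
have kj : (k <= j)%N.
  rewrite leqNgt; apply/negP => jk.
  have := before_find 0 jk; rewrite nth_iota ?add0n //.
  by rewrite /P hj (anc_b mc).
apply: Delta_anc; exists (j - k)%N.
by rewrite /lca -/k -iterD subnK.
Qed.

Lemma ultra a b c :
  Delta (lca par a c) <= Num.max (Delta (lca par a b)) (Delta (lca par b c)).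
Proof.
have [i hi] := lca_anc_r a b.
have [j hj] := lca_anc_l b c.
case: (leqP i j) => ij.
  have h : anc (lca par b c) (lca par a b).
    by exists (j - i)%N; rewrite -hi -iterD subnK.
  rewrite le_max; apply/orP; right; apply: lca_min.
    exact: anc_trans h (lca_anc_l _ _).
  exact: lca_anc_r.
have h : anc (lca par a b) (lca par b c).
  by exists (i - j)%N; rewrite -hj -iterD subnK // ltnW.
rewrite le_max; apply/orP; left; apply: lca_min.
  exact: lca_anc_l.
exact: anc_trans h (lca_anc_r _ _).
Qed.
End HST.
Unset Implicit Arguments.

Theorem proposition5p7 (R : realFieldType) (V : finType) (E : rel V)
  (w : V -> V -> R)
  (E_sym : symmetric E)
  (w_sym : forall x y, w x y = w y x)
  (w_pos : forall x y, E x y -> 0 < w x y)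
  (N : finType) (par : N -> N) (r : N) (Delta : N -> R) (mu : R)
  (hst : is_HST par r Delta mu)
  (f : V -> N)
  (f_leaf : forall v, leafb par (f v))
  (noncontr : forall x y d, is_sp_dist E w x y d ->
      d <= hst_dist par Delta (f x) (f y))
  (u v : V) (uv : u != v)
  (p : seq V) (p_path : path E u p) (p_end : last u p = v)
  (p_simple : uniq (u :: p)) :
  has (fun e : V * V => hst_dist par Delta (f u) (f v)
                        <= hst_dist par Delta (f e.1) (f e.2))
      (walk_edges u p).
Proof.
set D := hst_dist par Delta (f u) (f v).
have key : forall x q, q != [::] ->
    all (fun e : V * V => hst_dist par Delta (f e.1) (f e.2) < D)
        (walk_edges x q) ->
    hst_dist par Delta (f x) (f (last x q)) < D.
  move=> x q; elim: q x => [//|y q IH] x _ /= /andP [hxy hall].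
  case: q IH hall => [|z q] IH hall; first by [].
  have := IH y isT hall => hy.
  apply: le_lt_trans (ultra hst _ (f y) _) _.
  by rewrite /Num.max; case: ifP.
apply/negPn/negP => hn.
have pn : p != [::].
  by move: p_end; case: p {p_path p_simple hn} => //= e; rewrite e eqxx in uv.
have : D < D.
  rewrite {1}/D -p_end; apply: key pn _.
  apply/allP => e he; rewrite ltNge; apply/negP => hle.
  by move/negP: hn; apply; apply/hasP; exists e.
by rewrite ltxx.
Qed.
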